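(* Let $x$ be an envy-free complete connected division of a cake among $n$ players. Then there is no connected division $y$ (partial or complete) that strictly Pareto dominates $x$, i.e., there is no connected division $y$ with $u_i(y,i)>u_i(x,i)$ for all $i\in\{1,\dots,n\}$.
   Context: A cake is the interval $[0,1]$. There are $n$ players; each player $i$ has a valuation $v_i$, a nonatomic probability measure on $[0,1]$. A (connected) division $x$ is a sequence $(X_1,\dots,X_n)$ of pairwise disjoint open intervals of $[0,1]$ (possibly empty), $X_i$ being the piece of player $i$; it is complete if the union of the closures of the $X_i$ equals $[0,1]$, and partial otherwise. Write $u_i(x,j)=v_i(X_j)$. $x$ is envy-free if $u_i(x,i)\ge u_i(x,j)$ for all $i,j$. *)

(* Defs.v *)
From Stdlib Require Import Reals.
Open Scope R_scope.

(* A nonatomic probability measure on [0,1] is represented by its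
   cumulative distribution function F(t) = v([0,t]) restricted to [0,1]:
   F(0)=0, F(1)=1, F nondecreasing and continuous on [0,1] (continuity
   <=> nonatomic).  Such F determine the Borel measure uniquely and
   every such F arises from one. *)
Record valuation := mkValuation {
  cdf : R -> R;
  cdf0 : cdf 0 = 0;
  cdf1 : cdf 1 = 1;
  cdf_mono : forall a b, 0 <= a -> a <= b -> b <= 1 -> cdf a <= cdf b;
  cdf_cont : forall t eps, 0 <= t <= 1 -> 0 < eps ->
     exists delta, 0 < delta /\
       forall s, 0 <= s <= 1 -> Rabs (s - t) < delta -> Rabs (cdf s - cdf t) < eps
}.

(* A piece is an open interval (a,b) with 0 <= a <= b <= 1; it is empty iff a = b. *)
Definition piece := (R * R)%type.

Definition valid_piece (p : piece) : Prop := 0 <= fst p /\ fst p <= snd p /\ snd p <= 1.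

Definition empty_piece (p : piece) : Prop := fst p = snd p.

Definition disjoint_pieces (p q : piece) : Prop :=
  empty_piece p \/ empty_piece q \/ snd p <= fst q \/ snd q <= fst p.

Definition value (v : valuation) (p : piece) : R := cdf v (snd p) - cdf v (fst p).

Definition is_division (n : nat) (x : nat -> piece) : Prop :=
  (forall i, (i < n)%nat -> valid_piece (x i)) /\
  (forall i j, (i < n)%nat -> (j < n)%nat -> i <> j -> disjoint_pieces (x i) (x j)).

(* complete: union of closures of the pieces equals [0,1]
   (closure of a nonempty (a,b) is [a,b]; closure of the empty set is empty) *)
Definition complete (n : nat) (x : nat -> piece) : Prop :=
  forall t, 0 <= t <= 1 ->
    exists i, (i < n)%nat /\ ~ empty_piece (x i) /\ fst (x i) <= t <= snd (x i).

Definition u (v : nat -> valuation) (x : nat -> piece) (i j : nat) : R := value (v i) (x j).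

Definition envy_free (n : nat) (v : nat -> valuation) (x : nat -> piece) : Prop :=
  forall i j, (i < n)%nat -> (j < n)%nat -> u v x i i >= u v x i j.

(* Main.v *)
Require Import Defs.
From Stdlib Require Import Reals.
From Stdlib Require Import Lra Lia Classical.
Open Scope R_scope.

Lemma php : forall n m, (m < n)%nat -> forall R : nat -> nat -> Prop,
  (forall i, (i < n)%nat -> exists j, (j < m)%nat /\ R i j) ->
  exists i i' j, (i < n)%nat /\ (i' < n)%nat /\ i <> i' /\ R i j /\ R i' j.
Proof.
  induction n as [|n IH]; intros m Hm R HR; [lia|].
  destruct (HR n ltac:(lia)) as [j [Hj Rj]].
  destruct (classic (exists i, (i < n)%nat /\ R i j)) as [[i [Hi Ri]]|Hno].
  - exists i, n, j. repeat split; auto; lia.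
  - destruct m as [|m]; [lia|].
    set (R' := fun i k => exists j', R i j' /\ j' <> j /\ (j' < S m)%nat /\
                  k = (if Nat.ltb j' j then j' else pred j')).
    destruct (IH m ltac:(lia) R') as [i [i' [k [Hi [Hi' [Hne [[a [Ra [Haj [Ham Hk]]]] [b [Rb [Hbj [Hbm Hk']]]]]]]]]]].
    + intros i Hi. destruct (HR i ltac:(lia)) as [j' [Hj' Rj']].
      assert (j' <> j) by (intro; subst; apply Hno; eauto).
      exists (if Nat.ltb j' j then j' else pred j'). split.
      * destruct (Nat.ltb_spec j' j); lia.
      * exists j'; auto.
    + assert (a = b).
      { subst k. destruct (Nat.ltb_spec a j), (Nat.ltb_spec b j); lia. }
      subst b. exists i, i', a. repeat split; auto; lia.
Qed.

Lemma val_nonneg (v : valuation) (p : piece) : valid_piece p -> 0 <= value v p.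
Proof.
  intros [H1 [H2 H3]]. unfold value. pose proof (cdf_mono v _ _ H1 H2 H3). lra.
Qed.

Lemma find_cut (n : nat) (v : nat -> valuation) (x y : nat -> piece) (i : nat) :
  is_division n x -> complete n x -> envy_free n v x ->
  valid_piece (y i) -> (i < n)%nat -> u v y i i > u v x i i ->
  fst (y i) < snd (y i) /\
  exists j, (j < n)%nat /\ ~ empty_piece (x j) /\ fst (y i) < fst (x j) < snd (y i).
Proof.
  intros [Hv Hd] Hc Hef Hy Hi Hgt.
  destruct Hy as [Ya [Yab Yb]].
  pose proof (val_nonneg (v i) (x i) (Hv i Hi)) as Hxi.
  unfold u in Hgt.
  assert (Hab : fst (y i) < snd (y i)).
  { destruct (Rle_lt_or_eq_dec _ _ Yab) as [h|h]; auto.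
    unfold value in Hgt, Hxi. rewrite h in Hgt. lra. }
  split; auto.
  set (a := fst (y i)) in *. set (b := snd (y i)) in *.
  destruct (Hc ((a+b)/2) ltac:(lra)) as [j [Hj [Hne [Hcj Hdj]]]].
  destruct (Hv j Hj) as [Vc [Vcd Vd]].
  assert (Hcd : fst (x j) < snd (x j)).
  { destruct (Rle_lt_or_eq_dec _ _ Vcd) as [h|h]; auto; contradiction. }
  destruct (Rlt_or_le a (fst (x j))) as [H1|H1].
  { exists j; repeat split; auto; lra. }
  destruct (Rle_or_lt b (snd (x j))) as [H2|H2].
  { exfalso. pose proof (Hef i j Hi Hj) as E. unfold u, value in E, Hgt.
    pose proof (cdf_mono (v i) (fst (x j)) a Vc H1 ltac:(lra)).
    pose proof (cdf_mono (v i) b (snd (x j)) ltac:(lra) H2 Vd). unfold a, b in *. lra. }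
  destruct (Hc ((snd (x j) + b)/2) ltac:(lra)) as [k [Hk [Hnek [Hck Hdk]]]].
  destruct (Hv k Hk) as [Wc [Wcd Wd]].
  assert (Hjk : j <> k) by (intro; subst; lra).
  destruct (Hd j k Hj Hk Hjk) as [h|[h|[h|h]]].
  - contradiction.
  - contradiction.
  - exists k; repeat split; auto; lra.
  - lra.
Qed.

Theorem theorem4 (n : nat) (v : nat -> valuation) (x : nat -> piece) :
  is_division n x -> complete n x -> envy_free n v x ->
  ~ exists y : nat -> piece,
      is_division n y /\ (forall i, (i < n)%nat -> u v y i i > u v x i i).
Proof.
  intros Hx Hc Hef [y [[Yv Yd] Hdom]].
  destruct (Hc 0 ltac:(lra)) as [j0 [Hj0 [Hne0 [H0a H0b]]]].
  assert (Hx0 : fst (x j0) = 0) by (destruct Hx as [Hv _]; destruct (Hv j0 Hj0); lra).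
  destruct n as [|m]; [lia|].
  set (R := fun i k => exists j, (j < S m)%nat /\ j <> j0 /\ ~ empty_piece (x j) /\
             fst (y i) < fst (x j) < snd (y i) /\
             k = (if Nat.ltb j j0 then j else pred j)).
  destruct (php (S m) m ltac:(lia) R) as [i [i' [k [Hi [Hi' [Hii [[a [Ha [Haj [_ [Hay Hk]]]]] [b [Hb [Hbj [_ [Hby Hk']]]]]]]]]]]].
  - intros i Hi.
    destruct (find_cut (S m) v x y i Hx Hc Hef (Yv i Hi) Hi (Hdom i Hi)) as [_ [j [Hj [Hne Hin]]]].
    assert (j <> j0) by (intro; subst; destruct (Yv i Hi); lra).
    exists (if Nat.ltb j j0 then j else pred j). split.
    + destruct (Nat.ltb_spec j j0); lia.
    + exists j; repeat split; auto; lra.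
  - assert (a = b) by (subst k; destruct (Nat.ltb_spec a j0), (Nat.ltb_spec b j0); lia).
    subst b.
    destruct (Yd i i' Hi Hi' Hii) as [h|[h|[h|h]]]; unfold empty_piece in *; lra.
Qed.
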